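(* $\operatorname{BSR}(5,4)\ge 11$. In particular, the biquadratic form \[P(\mathbf{x},\mathbf{y})=x_1^2y_1^2+x_1^2y_2^2+x_1^2y_3^2+x_2^2y_1^2+x_2^2y_4^2+x_3^2y_2^2+x_3^2y_4^2+x_4^2y_3^2+x_4^2y_4^2+x_5^2y_1^2+(x_2y_3+x_5y_4)^2\] on $\mathbb{R}^5\times\mathbb{R}^4$ has SOS rank $11$ (i.e., it cannot be written as a sum of fewer than 11 squares of bilinear forms).
   Context: An $m\times n$ biquadratic form is a polynomial $P(\mathbf{x},\mathbf{y})=\sum_{i,k=1}^m\sum_{j,l=1}^n a_{ijkl}x_ix_ky_jy_l$ with real coefficients, $\mathbf{x}\in\mathbb{R}^m$, $\mathbf{y}\in\mathbb{R}^n$. It is SOS if $P=\sum_{p=1}^r f_p^2$ for some real bilinear forms $f_p(\mathbf{x},\mathbf{y})=\sum_{i,j}c^{(p)}_{ij}x_iy_j$; the least such $r$ is the SOS rank $\operatorname{sos}(P)$. $\operatorname{BSR}(m,n)$ is the maximum of $\operatorname{sos}(P)$ over all $m\times n$ SOS biquadratic forms $P$. *)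

(* Defs.v *)
From HB Require Import structures.
From mathcomp Require Import all_boot all_order all_algebra.
From mathcomp Require Import reals.
Set Implicit Arguments. Unset Strict Implicit. Unset Printing Implicit Defensive.
Import Order.TTheory GRing.Theory Num.Theory.
Local Open Scope ring_scope.

(* Vectors x in R^m are functions 'I_m -> R; indices are 0-based
   (x_1 of the paper is x (inord 0), etc.). *)

Definition bilin (R : realType) (m n : nat) (C : 'M[R]_(m, n))
  (x : 'I_m -> R) (y : 'I_n -> R) : R :=
  \sum_(i < m) \sum_(j < n) C i j * x i * y j.

Definition is_biquadratic (R : realType) (m n : nat)
  (P : ('I_m -> R) -> ('I_n -> R) -> R) : Prop :=
  exists a : 'I_m -> 'I_n -> 'I_m -> 'I_n -> R,
    forall x y, P x y =
      \sum_(i < m) \sum_(k < m) \sum_(j < n) \sum_(l < n)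
         a i j k l * x i * x k * y j * y l.

Definition is_sos_r (R : realType) (m n : nat)
  (P : ('I_m -> R) -> ('I_n -> R) -> R) (r : nat) : Prop :=
  exists C : 'I_r -> 'M[R]_(m, n),
    forall x y, P x y = \sum_(p < r) (bilin (C p) x y) ^+ 2.

Definition is_sos (R : realType) (m n : nat)
  (P : ('I_m -> R) -> ('I_n -> R) -> R) : Prop := exists r, is_sos_r P r.

Definition sos_rank_ge (R : realType) (m n : nat)
  (P : ('I_m -> R) -> ('I_n -> R) -> R) (k : nat) : Prop :=
  forall r, (r < k)%N -> ~ is_sos_r P r.

Definition BSR_ge (R : realType) (m n k : nat) : Prop :=
  exists P : ('I_m -> R) -> ('I_n -> R) -> R,
    [/\ is_biquadratic P, is_sos P & sos_rank_ge P k].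

Definition P54 (R : realType) (x : 'I_5 -> R) (y : 'I_4 -> R) : R :=
  let x1 := x (inord 0) in let x2 := x (inord 1) in let x3 := x (inord 2) in
  let x4 := x (inord 3) in let x5 := x (inord 4) in
  let y1 := y (inord 0) in let y2 := y (inord 1) in let y3 := y (inord 2) in
  let y4 := y (inord 3) in
  x1^+2 * y1^+2 + x1^+2 * y2^+2 + x1^+2 * y3^+2 + x2^+2 * y1^+2
  + x2^+2 * y4^+2 + x3^+2 * y2^+2 + x3^+2 * y4^+2 + x4^+2 * y3^+2
  + x4^+2 * y4^+2 + x5^+2 * y1^+2 + (x2 * y3 + x5 * y4) ^+ 2.

(* Main.v *)
Require Import Defs.
From HB Require Import structures.
From mathcomp Require Import all_boot all_order all_algebra.
From mathcomp Require Import reals.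
From mathcomp Require Import ring lra.
Set Implicit Arguments. Unset Strict Implicit. Unset Printing Implicit Defensive.
Import Order.TTheory GRing.Theory Num.Theory.
Local Open Scope ring_scope.

Definition pt (R : realType) n (i k : 'I_n) (t : R) : 'I_n -> R :=
  fun a => (a == i)%:R + t * (a == k)%:R.

Lemma inord_eq n a b : (a <= n)%N -> (b <= n)%N ->
  ((inord a : 'I_n.+1) == inord b) = (a == b).
Proof. by move=> ha hb; rewrite -val_eqE /= !inordK. Qed.

Lemma sum_delta (R : realType) m (F : 'I_m -> R) i :
  \sum_(a < m) F a * (a == i)%:R = F i.
Proof.
rewrite (bigD1 i) //= eqxx mulr1 big1 ?addr0 // => a /negbTE ->; by rewrite mulr0.
Qed.

Lemma sum_pt (R : realType) m (F : 'I_m -> R) i k t :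
  \sum_(a < m) F a * pt i k t a = F i + t * F k.
Proof.
rewrite /pt; under eq_bigr do rewrite mulrDr mulrCA.
by rewrite big_split /= sum_delta -mulr_sumr sum_delta.
Qed.

Lemma bilin_pt (R : realType) m n (C : 'M[R]_(m,n)) i k t j l s :
  bilin C (pt i k t) (pt j l s) = C i j + s * C i l + t * C k j + t * s * C k l.
Proof.
rewrite /bilin.
under eq_bigr => a _.
  under eq_bigr do rewrite -mulrA mulrCA.
  rewrite -mulr_sumr sum_pt mulrC.
  over.
rewrite /= sum_pt; ring.
Qed.

Definition G (R : realType) r (C : 'I_r -> 'M[R]_(5,4)) (a b : 'I_5 * 'I_4) :=
  \sum_(p < r) C p a.1 a.2 * C p b.1 b.2.
Arguments G : simpl never.

Lemma Gsym (R : realType) r (C : 'I_r -> 'M[R]_(5,4)) a b : G C a b = G C b a.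
Proof. by apply eq_bigr => p _; rewrite mulrC. Qed.

Lemma GH (R : realType) r (C : 'I_r -> 'M[R]_(5,4)) :
  (forall x y, P54 x y = \sum_(p < r) (bilin (C p) x y) ^+ 2) ->
  forall i j k l,
  G C (i,j) (k,l) + G C (i,l) (k,j) =
  (P54 (pt i k 1) (pt j l 1) - P54 (pt i k (-1)) (pt j l 1)
   - P54 (pt i k 1) (pt j l (-1)) + P54 (pt i k (-1)) (pt j l (-1))) / 8.
Proof.
move=> hP i j k l; rewrite !hP.
have E : forall t s, \sum_(p < r) bilin (C p) (pt i k t) (pt j l s) ^+ 2 =
   \sum_(p < r) (C p i j + s * C p i l + t * C p k j + t * s * C p k l) ^+ 2.
  by move=> t s; apply eq_bigr => p _; rewrite bilin_pt.
rewrite !E.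
rewrite /G -!sumrB -!big_split /= mulr_suml; apply eq_bigr => p _ /=.
by field.
Qed.

Lemma Gzero (R : realType) r (C : 'I_r -> 'M[R]_(5,4)) a :
  G C a a = 0 -> forall b, G C a b = 0 /\ G C b a = 0.
Proof.
move=> h.
have hp : forall p, C p a.1 a.2 = 0.
  move=> p; move/eqP: h; rewrite /G psumr_eq0; last by move=> q _; rewrite -expr2 sqr_ge0.
  by move/allP => /(_ p (mem_index_enum _)) /=; rewrite mulf_eq0 orbb => /eqP.
by move=> b; split; apply big1 => p _; rewrite hp ?mul0r ?mulr0.
Qed.

Lemma Geq (R : realType) r (C : 'I_r -> 'M[R]_(5,4)) a b :
  G C a a + G C b b - 2 * G C a b = 0 -> forall c, G C c a = G C c b.
Proof.
move=> h.
have hp : forall p, C p a.1 a.2 = C p b.1 b.2.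
  have : \sum_(p < r) (C p a.1 a.2 - C p b.1 b.2) ^+ 2 = 0.
    transitivity (G C a a + G C b b - 2 * G C a b); last exact: h.
    rewrite /G mulr_sumr -big_split -sumrB /=; apply eq_bigr => p _; ring.
  move/eqP; rewrite psumr_eq0; last by move=> q _; rewrite sqr_ge0.
  move/allP => H p; move: (H p (mem_index_enum _)) => /=.
  by rewrite sqrf_eq0 subr_eq0 => /eqP.
by move=> c; apply eq_bigr => p _; rewrite hp.
Qed.

Local Notation pr i j := ((inord i : 'I_5), (inord j : 'I_4)).

Definition idx (a : 'I_11) : 'I_5 * 'I_4 :=
  nth (pr 0 0) [:: pr 0 0; pr 0 1; pr 0 2; pr 1 0; pr 1 3; pr 2 1; pr 2 3;
                   pr 3 2; pr 3 3; pr 4 0; pr 1 2] a.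

Definition ev (R : realType) (i k j l : nat) (t s : R) : R :=
  let X (a : nat) : R := (a == i)%:R + t * (a == k)%:R in
  let Y (b : nat) : R := (b == j)%:R + s * (b == l)%:R in
  X 0%N^+2 * Y 0%N^+2 + X 0%N^+2 * Y 1%N^+2 + X 0%N^+2 * Y 2%N^+2 + X 1%N^+2 * Y 0%N^+2
  + X 1%N^+2 * Y 3%N^+2 + X 2%N^+2 * Y 1%N^+2 + X 2%N^+2 * Y 3%N^+2 + X 3%N^+2 * Y 2%N^+2
  + X 3%N^+2 * Y 3%N^+2 + X 4%N^+2 * Y 0%N^+2 + (X 1%N * Y 2%N + X 4%N * Y 3%N) ^+ 2.

Lemma P54_pt (R : realType) i k j l (t s : R) :
  (i <= 4)%N -> (k <= 4)%N -> (j <= 3)%N -> (l <= 3)%N ->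
  P54 (pt (inord i : 'I_5) (inord k) t) (pt (inord j : 'I_4) (inord l) s) = ev i k j l t s.
Proof. by move=> *; rewrite /P54 /pt /ev !inord_eq. Qed.

Lemma HGn (R : realType) r (C : 'I_r -> 'M[R]_(5,4)) :
  (forall x y, P54 x y = \sum_(p < r) (bilin (C p) x y) ^+ 2) ->
  forall i j k l, (i <= 4)%N -> (j <= 3)%N -> (k <= 4)%N -> (l <= 3)%N ->
  G C (pr i j) (pr k l) + G C (pr i l) (pr k j) =
  (ev i k j l 1 1 - ev i k j l (-1) 1 - ev i k j l 1 (-1) + ev i k j l (-1) (-1)) / 8.
Proof. by move=> hP i j k l *; rewrite (GH hP) !P54_pt. Qed.

Ltac hh HG i j k l :=
  let h := fresh "h" in
  have h := HG i j k l isT isT isT isT;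
  rewrite /ev /= in h.

Lemma key (R : realType) r (C : 'I_r -> 'M[R]_(5,4)) :
  (forall x y, P54 x y = \sum_(p < r) (bilin (C p) x y) ^+ 2) ->
  forall a b : 'I_11, (a <= b)%N -> G C (idx a) (idx b) = (a == b)%:R.
Proof.
move=> hP; have HG := HGn hP.
have [Zl03 Zr03] : (forall b, G C (pr 0 3) b = 0) /\ (forall b, G C b (pr 0 3) = 0).
  have hz : G C (pr 0 3) (pr 0 3) = 0 by hh HG 0%N 3%N 0%N 3%N; lra.
  by split => b; have [] := Gzero hz b.
have [Zl11 Zr11] : (forall b, G C (pr 1 1) b = 0) /\ (forall b, G C b (pr 1 1) = 0).
  have hz : G C (pr 1 1) (pr 1 1) = 0 by hh HG 1%N 1%N 1%N 1%N; lra.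
  by split => b; have [] := Gzero hz b.
have [Zl20 Zr20] : (forall b, G C (pr 2 0) b = 0) /\ (forall b, G C b (pr 2 0) = 0).
  have hz : G C (pr 2 0) (pr 2 0) = 0 by hh HG 2%N 0%N 2%N 0%N; lra.
  by split => b; have [] := Gzero hz b.
have [Zl22 Zr22] : (forall b, G C (pr 2 2) b = 0) /\ (forall b, G C b (pr 2 2) = 0).
  have hz : G C (pr 2 2) (pr 2 2) = 0 by hh HG 2%N 2%N 2%N 2%N; lra.
  by split => b; have [] := Gzero hz b.
have [Zl30 Zr30] : (forall b, G C (pr 3 0) b = 0) /\ (forall b, G C b (pr 3 0) = 0).
  have hz : G C (pr 3 0) (pr 3 0) = 0 by hh HG 3%N 0%N 3%N 0%N; lra.
  by split => b; have [] := Gzero hz b.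
have [Zl31 Zr31] : (forall b, G C (pr 3 1) b = 0) /\ (forall b, G C b (pr 3 1) = 0).
  have hz : G C (pr 3 1) (pr 3 1) = 0 by hh HG 3%N 1%N 3%N 1%N; lra.
  by split => b; have [] := Gzero hz b.
have [Zl41 Zr41] : (forall b, G C (pr 4 1) b = 0) /\ (forall b, G C b (pr 4 1) = 0).
  have hz : G C (pr 4 1) (pr 4 1) = 0 by hh HG 4%N 1%N 4%N 1%N; lra.
  by split => b; have [] := Gzero hz b.
have [Zl42 Zr42] : (forall b, G C (pr 4 2) b = 0) /\ (forall b, G C b (pr 4 2) = 0).
  have hz : G C (pr 4 2) (pr 4 2) = 0 by hh HG 4%N 2%N 4%N 2%N; lra.
  by split => b; have [] := Gzero hz b.
have Zall : forall (i j : nat) b, (i, j) \in ([:: (0,3); (1,1); (2,0); (2,2); (3,0); (3,1); (4,1); (4,2)] : seq (nat * nat)) ->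
   G C (pr i j) b = 0 /\ G C b (pr i j) = 0.
  move=> i j b; rewrite !inE.
  case/orP => [/eqP [-> ->]|]; first by split; [exact: Zl03 | exact: Zr03].
  case/orP => [/eqP [-> ->]|]; first by split; [exact: Zl11 | exact: Zr11].
  case/orP => [/eqP [-> ->]|]; first by split; [exact: Zl20 | exact: Zr20].
  case/orP => [/eqP [-> ->]|]; first by split; [exact: Zl22 | exact: Zr22].
  case/orP => [/eqP [-> ->]|]; first by split; [exact: Zl30 | exact: Zr30].
  case/orP => [/eqP [-> ->]|]; first by split; [exact: Zl31 | exact: Zr31].
  case/orP => [/eqP [-> ->]|]; first by split; [exact: Zl41 | exact: Zr41].
  move/eqP => [-> ->]; by split; [exact: Zl42 | exact: Zr42].
have E43 : forall c, G C c (pr 4 3) = G C c (pr 1 2).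
  apply: Geq; hh HG 4%N 3%N 4%N 3%N; hh HG 1%N 2%N 1%N 2%N; hh HG 4%N 3%N 1%N 2%N.
  have z : G C (pr 4 2) (pr 1 3) = 0 by exact: Zl42.
  have := Gsym C (pr 1 2) (pr 4 3). lra.
have F1 : G C (pr 0 0) (pr 1 2) = 0.
  rewrite -E43; hh HG 0%N 0%N 4%N 3%N; have z : G C (pr 0 3) (pr 4 0) = 0 by exact: Zl03. lra.
have F2 : G C (pr 1 2) (pr 3 3) = 0.
  rewrite Gsym -E43; hh HG 3%N 3%N 4%N 3%N; lra.
have F3 : G C (pr 1 0) (pr 4 3) = 0.
  rewrite E43; hh HG 1%N 0%N 1%N 2%N; have := Gsym C (pr 1 2) (pr 1 0); lra.
move=> a b.
case: a => [[|[|[|[|[|[|[|[|[|[|[|a]]]]]]]]]]] Ha] //;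
case: b => [[|[|[|[|[|[|[|[|[|[|[|b]]]]]]]]]]] Hb] //; move=> /= hab; try discriminate hab;
rewrite /idx /=;
match goal with |- G C (inord ?i, inord ?j) (inord ?k, inord ?l) = _ =>
  let h := fresh "h" in
  have h := HG i j k l isT isT isT isT; rewrite /ev /= in h;
  let h2 := fresh "h" in
  have h2 := Gsym C (inord i, inord l) (inord k, inord j);
  let h3 := fresh "h" in
  have h3 := Gsym C (inord i, inord j) (inord k, inord l);
  try (let z := fresh "z" in have z := proj1 (Zall i l (inord k, inord j) isT));
  try (let z := fresh "z" in have z := proj2 (Zall k j (inord i, inord l) isT));
  first [clear F1 F2 F3; lra | lra] end.
Qed.

Lemma key2 (R : realType) r (C : 'I_r -> 'M[R]_(5,4)) :
  (forall x y, P54 x y = \sum_(p < r) (bilin (C p) x y) ^+ 2) ->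
  forall a b : 'I_11, G C (idx a) (idx b) = (a == b)%:R.
Proof.
move=> hP a b; case: (leqP a b) => hab; first exact: key.
by rewrite Gsym key ?(ltnW hab) // eq_sym.
Qed.

Lemma bilin_delta (R : realType) m n (i : 'I_m) (j : 'I_n) x y :
  bilin (delta_mx i j : 'M[R]_(m,n)) x y = x i * y j.
Proof.
rewrite /bilin (bigD1 i) //= [X in _ + X]big1 ?addr0; last first.
  by move=> a /negbTE ai; apply big1 => b _; rewrite mxE ai /= !mul0r.
rewrite (bigD1 j) //= [X in _ + X]big1 ?addr0; last first.
  by move=> b /negbTE bj; rewrite mxE bj andbF !mul0r.
by rewrite mxE !eqxx mul1r.
Qed.

Lemma bilinD (R : realType) m n (A B : 'M[R]_(m,n)) x y :
  bilin (A + B) x y = bilin A x y + bilin B x y.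
Proof.
rewrite /bilin -big_split; apply eq_bigr => a _ /=; rewrite -big_split; apply eq_bigr => b _ /=.
by rewrite mxE; ring.
Qed.

Local Notation dm i j := (delta_mx (inord i : 'I_5) (inord j : 'I_4)).

Lemma sos11 (R : realType) : is_sos_r (@P54 R) 11.
Proof.
exists (fun p => nth 0 [:: dm 0 0; dm 0 1; dm 0 2; dm 1 0; dm 1 3; dm 2 1; dm 2 3;
                   dm 3 2; dm 3 3; dm 4 0; dm 1 2 + dm 4 3] p).
move=> x y; rewrite !big_ord_recr big_ord0 /=.
rewrite bilinD !bilin_delta /P54; ring.
Qed.

Lemma sos_biq (R : realType) m n (P : ('I_m -> R) -> ('I_n -> R) -> R) r :
  is_sos_r P r -> is_biquadratic P.
Proof.
case=> C hP; exists (fun i j k l => \sum_(p < r) C p i j * C p k l) => x y.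
rewrite hP.
transitivity (\sum_(p < r) \sum_(i < m) \sum_(k < m) \sum_(j < n) \sum_(l < n)
   (C p i j * C p k l) * x i * x k * y j * y l).
  apply eq_bigr => p _; rewrite expr2 /bilin big_distrlr /=.
  apply eq_bigr => i _; apply eq_bigr => k _.
  rewrite big_distrlr /=; apply eq_bigr => j _; apply eq_bigr => l _; ring.
rewrite exchange_big /=; apply eq_bigr => i _.
rewrite exchange_big /=; apply eq_bigr => k _.
rewrite exchange_big /=; apply eq_bigr => j _.
rewrite exchange_big /=; apply eq_bigr => l _.
by rewrite !mulr_suml.
Qed.

Lemma rank_bound (R : realType) r (U : 'M[R]_(11, r)) : U *m U^T = 1%:M -> (11 <= r)%N.
Proof.
move=> h; have := mxrankM_maxl U U^T; rewrite h mxrank1 => h1.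
exact: leq_trans h1 (rank_leq_col U).
Qed.

Theorem corollary5p2 (R : realType) :
  BSR_ge R 5 4 11 /\
  [/\ is_biquadratic (@P54 R), is_sos_r (@P54 R) 11 & sos_rank_ge (@P54 R) 11].
Proof.
have sos := sos11 R.
have low : sos_rank_ge (@P54 R) 11.
  move=> r hr [C hP].
  pose U := \matrix_(a < 11, p < r) C p (idx a).1 (idx a).2.
  have hU : U *m U^T = 1%:M.
    apply/matrixP => a b; rewrite !mxE -(key2 hP a b) /G.
    by apply eq_bigr => p _; rewrite !mxE.
  by have := rank_bound hU; rewrite leqNgt hr.
have biq := sos_biq sos.
split; first by exists (@P54 R); split => //; exists 11%N.
by split.
Qed.
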